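(* Let $m\ge 3$ and let $X$ be a finite connected $2$-connected graph such that the number $N_e$ of maximal spanning trees of $X$ not containing the edge $e$ equals a constant $N$ independent of $e$. Let $\widetilde{X}$ be its $\mathbb{Z}_m$-homology cover with graph metric $d$, and let $d_Q$ be as defined below. Then for all $x,y\in\widetilde{X}$, $$d_Q(x,y)<\mathrm{girth}(X)\iff d(x,y)<\mathrm{girth}(X),$$ and if these inequalities hold then $d_Q(x,y)=d(x,y)$.
   Context: A graph is $2$-connected if removing any single edge leaves it connected; girth is the length of a shortest cycle. $\mathbb{Z}_m$-homology cover: fix orientations of the edges of $X$; for a maximal spanning tree $T$ with complementary edges $e_1,\dots,e_r$ (a free basis of $\pi_1(X)$), let $\rho:\pi_1(X)\to K=\pi_1(X)/[\pi_1(X),\pi_1(X)]\pi_1(X)^m\cong\oplus^r\mathbb{Z}_m$; $\widetilde{X}$ has vertices $V(X)\times K$, edges $E(X)\times K$, where for $e$ from $v$ to $w$ the edge $(e,k)$ joins $(v,k)$ to $(w,k)$ if $e\in T$ and to $(w,\rho(e)k)$ if $e\notin T$ (independent of $T$ up to isomorphism over $X$); $\pi:\widetilde{X}\to X$ is the projection. For a maximal tree $T$, the clouds are the sets $V(X)\times\{k\}$, $k\in K$; $C^T_x$ denotes the cloud containing $x$, and clouds are identified with elements of $\oplus^r\mathbb{Z}_m$; $d_T$ is the word metric on $\oplus^r\mathbb{Z}_m$ with respect to the generators $\rho(e_1),\dots,\rho(e_r)$ (one generator per factor). The metric $d_Q$: for $x,y\in\widetilde{X}$ choose a $d$-geodesic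 $\gamma$ from $x$ to $y$, and for an edge $e$ of $X$ let $\phi(e,x,y)\in\{0,\dots,m-1\}$ be the residue mod $m$ of $\big||\pi^{-1}(e)\cap\gamma|-|\pi^{-1}(e^{-1})\cap\gamma|\big|$, where these count the traversals by $\gamma$ of lifts of $e$ in the positive, respectively negative, direction. Then $d_Q(x,y)=\sum_{e\in E(X)}\sum_{T:\,e\notin T}\frac{1}{N_e}\min\{\phi(e,x,y),m-\phi(e,x,y)\}$, the inner sum over maximal spanning trees not containing $e$. When $N_e=N$ for all $e$ one has $d_Q(x,y)=\frac1N\sum_T d_T(C^T_x,C^T_y)$, summing over all maximal spanning trees $T$. *)

(* Defs.v *)
From HB Require Import structures.
From mathcomp Require Import all_boot all_order all_algebra.
From Stdlib Require Import ClassicalEpsilon.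
Set Implicit Arguments. Unset Strict Implicit. Unset Printing Implicit Defensive.
Import Order.TTheory GRing.Theory Num.Theory.

Definition pbool (P : Prop) : bool :=
  if excluded_middle_informative P then true else false.

(* A dart is an edge with a direction
   (true = positive direction src->tgt, false = negative direction).  *)
Section Walks.
Variables (V E : Type) (src tgt : E -> V).

Definition dstart (d : E * bool) : V := if d.2 then src d.1 else tgt d.1.
Definition dend (d : E * bool) : V := if d.2 then tgt d.1 else src d.1.

Fixpoint is_walk (x : V) (p : seq (E * bool)) (y : V) : Prop :=
  match p with
  | [::] => x = y
  | d :: p' => dstart d = x /\ is_walk (dend d) p' y
  end.

(* d-geodesic: a shortest walk from x to y (its length is d(x,y)). *)
Definition geodesic (x : V) (p : seq (E * bool)) (y : V) : Prop :=
  is_walk x p y /\ forall q, is_walk x q y -> (size p <= size q)%N.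
End Walks.

Section FinGraph.
Variables (V E : finType) (src tgt : E -> V).

Definition is_cycle (v : V) (p : seq (E * bool)) : Prop :=
  p <> [::] /\ is_walk src tgt v p v /\ uniq (map fst p)
  /\ uniq (map (dstart src tgt) p).

Definition graph_connected : Prop :=
  forall u v : V, exists p, is_walk src tgt u p v.

(* 2-connected in the sense of the paper: removing any single edge
   leaves the graph connected. *)
Definition two_connected : Prop :=
  forall e : E, forall u v : V,
    exists p, is_walk src tgt u p v /\ all (fun d => d.1 != e) p.

Definition spanning_tree (T : {set E}) : Prop :=
  (forall u v : V, exists p, is_walk src tgt u p v /\ all (fun d => d.1 \in T) p)
  /\ (forall v p, is_cycle v p -> ~ all (fun d => d.1 \in T) p).

Definition trees : {set {set E}} := [set T | pbool (spanning_tree T)].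

Definition Ne (e : E) : nat := #|[set T in trees | e \notin T]|.

(* [lt_girth q] : q < girth(X)  (girth = length of a shortest cycle,
   +infinity if X has no cycle). *)
Definition lt_girth (q : rat) : Prop :=
  forall v p, is_cycle v p -> (q < (size p)%:R)%R.

Variables (m : nat) (T0 : {set E}).

Definition cedge := {e : E | e \notin T0}.
Definition Kgrp := {ffun cedge -> 'Z_m}.

Definition rho (e : E) : Kgrp := [ffun c : cedge => if val c == e then 1%R else 0%R].

Definition cvert := (V * Kgrp)%type.
Definition cedg := (E * Kgrp)%type.
Definition csrc (ek : cedg) : cvert := (src ek.1, ek.2).
Definition ctgt (ek : cedg) : cvert := (tgt ek.1, (ek.2 + rho ek.1)%R).
(* projection pi on edges is [fst]. *)

(* phi(e,x,y) computed from a d-geodesic gamma of the cover *)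
Definition npos (e : E) (g : seq (cedg * bool)) : nat :=
  count (fun d => (d.1.1 == e) && d.2) g.
Definition nneg (e : E) (g : seq (cedg * bool)) : nat :=
  count (fun d => (d.1.1 == e) && ~~ d.2) g.
Definition phi (e : E) (g : seq (cedg * bool)) : nat :=
  (absz ((npos e g)%:Z - (nneg e g)%:Z)%R) %% m.

Definition dQ (g : seq (cedg * bool)) : rat :=
  (\sum_(e : E) \sum_(T in trees | e \notin T)
     ((Ne e)%:R)^-1 * (minn (phi e g) (m - phi e g))%:R)%R.
End FinGraph.

(* Main.v *)
Require Import Defs.
From HB Require Import structures.
From mathcomp Require Import all_boot all_order all_algebra intdiv.
From mathcomp Require Import zify.
From Stdlib Require Import ClassicalEpsilon.
Import Order.TTheory GRing.Theory Num.Theory.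
Set Implicit Arguments. Unset Strict Implicit. Unset Printing Implicit Defensive.
Local Open Scope ring_scope.


Lemma pboolE (P : Prop) : pbool P <-> P.
Proof. rewrite /pbool; case: excluded_middle_informative => //. Qed.

Section W.
Variables (V E : finType) (src tgt : E -> V).
Notation walk := (is_walk src tgt).
Notation dstart := (dstart src tgt).
Notation dend := (dend src tgt).

Lemma walk_cat x p q y z : walk x p y -> walk y q z -> walk x (p ++ q) z.
Proof. elim: p x => [|d p IH] x /=; [by move=> -> | by case=> <- H1 H2; split=> //; apply: IH H1 H2]. Qed.

Lemma walk_catE x p q z : walk x (p ++ q) z -> exists y, walk x p y /\ walk y q z.
Proof.
elim: p x => [|d p IH] x /=; first by move=> H; exists x.
case=> <- /IH [y [H1 H2]]; exists y; split=> //.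
Qed.

Lemma walk_verts x p y : walk x p y -> rcons (map dstart p) y = x :: map dend p.
Proof. elim: p x => [|d p IH] x /=; first by move=> ->. by case=> <- /IH ->. Qed.

Definition flip (d : E * bool) := (d.1, ~~ d.2).
Definition revw p := rev (map flip p).

Lemma walk_rev x p y : walk x p y -> walk y (revw p) x.
Proof.
elim: p x => [|d p IH] x /=; first by move=> ->.
case=> <- /IH H; rewrite /revw /= rev_cons -cats1.
apply: walk_cat H _ => /=; split=> //; rewrite /flip /Defs.dstart /Defs.dend /=; by case: d.2.
Qed.

Lemma map_dend_rev p : map dend (revw p) = rev (map dstart p).
Proof. rewrite /revw map_rev -map_comp; congr rev; apply: eq_map => d; rewrite /flip /Defs.dstart /Defs.dend /=; by case: d.2. Qed.

Fixpoint cnt (e : E) (p : seq (E * bool)) : int :=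
  match p with
  | [::] => 0
  | d :: p' => (if d.1 == e then (if d.2 then 1 else -1) else 0) + cnt e p'
  end.

Definition bd (b : E -> int) (z : V) : int :=
  \sum_(e : E) b e * ((tgt e == z)%:Z - (src e == z)%:Z).

Lemma bd_add b1 b2 z : bd (fun e => b1 e + b2 e) z = bd b1 z + bd b2 z.
Proof. rewrite /bd -big_split /=; apply: eq_bigr => e _; by rewrite mulrDl. Qed.

Lemma bd_sub b1 b2 z : bd (fun e => b1 e - b2 e) z = bd b1 z - bd b2 z.
Proof. rewrite /bd -sumrB /=; apply: eq_bigr => e _; by rewrite mulrBl. Qed.

Lemma bd_dart d z : bd (fun e => if d.1 == e then (if d.2 then 1 else -1) else 0) z
   = (dend d == z)%:Z - (dstart d == z)%:Z.
Proof.
rewrite /bd (bigD1 d.1) //= eqxx big1 ?addr0; last first.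
  by move=> e /negbTE; rewrite eq_sym => ->; rewrite mul0r.
rewrite /Defs.dstart /Defs.dend; case: d.2; rewrite ?mul1r //.
by rewrite mulN1r opprB.
Qed.

Lemma bd_walk x p y z : walk x p y -> bd (cnt ^~ p) z = (y == z)%:Z - (x == z)%:Z.
Proof.
elim: p x => [|d p IH] x /=.
  by move=> ->; rewrite /bd big1 ?subrr // => e _; rewrite mul0r.
case=> <- /IH H.
rewrite (bd_add (fun e => if d.1 == e then (if d.2 then 1 else -1) else 0) (cnt ^~ p)) H bd_dart.
by rewrite addrC addrA subrK.
Qed.

Lemma cnt_cat e p q : cnt e (p ++ q) = cnt e p + cnt e q.
Proof. elim: p => [|d p IH] /=; by rewrite ?add0r // IH addrA. Qed.

Lemma cnt_avoid e p : all (fun d => d.1 != e) p -> cnt e p = 0.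
Proof. elim: p => [|d p IH] //= /andP [/negbTE -> /IH ->]; by rewrite add0r. Qed.

Lemma sum_abs_cnt p : (\sum_e `|cnt e p| <= size p)%N.
Proof.
elim: p => [|d p IH] /=; first by rewrite big1.
apply: (leq_trans (n := \sum_e ((d.1 == e) + `|cnt e p|)%N)).
  apply: leq_sum => e _; case: eqP => _; last by rewrite add0r.
  by case: d.2; lia.
rewrite big_split /= (bigD1 d.1) //= eqxx big1 ?addn0 //.
by move=> e /negbTE; rewrite eq_sym => ->.
Qed.

End W.


Section F.
Variables (V E : finType) (src tgt : E -> V) (S : pred E).
Notation walk := (is_walk src tgt).
Notation dstart := (dstart src tgt).
Notation dend := (dend src tgt).

Definition sp w p z := walk w p z /\ all (fun d => S d.1) p /\ uniq (w :: map dend p).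
Definition leaf z e := S e /\ ((src e == z) != (tgt e == z)) /\
  forall e', e' != e -> S e' -> (src e' != z) && (tgt e' != z).
Definition acyclic := forall v p, is_cycle src tgt v p -> ~ all (fun d => S d.1) p.

Lemma endpointsE d z : (z == src d.1) || (z == tgt d.1) = (z == dstart d) || (z == dend d).
Proof. rewrite /Defs.dstart /Defs.dend; case: d.2 => //; by rewrite orbC. Qed.

Lemma split_vertex w p z w' : walk w p z -> w' \in w :: map dend p ->
  exists p1 p2, p = p1 ++ p2 /\ walk w p1 w' /\ walk w' p2 z.
Proof.
elim: p w => [|d p IH] w /=.
  move=> -> ; rewrite inE => /eqP ->; by exists [::], [::].
case=> <- Hw; rewrite inE => /orP [/eqP -> | Hin].
  by exists [::], (d :: p).
have [p1 [p2 [-> [H1 H2]]]] := IH _ Hw Hin.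
by exists (d :: p1), p2.
Qed.

Lemma walk_last_in x p y : walk x p y -> p != [::] -> y \in map dend p.
Proof.
elim: p x => [|d p IH] x //= [_ Hw] _.
case: p IH Hw => [|d1 p] IH Hw; first by rewrite -Hw inE.
by rewrite inE (IH _ Hw) ?orbT.
Qed.

Lemma last_dart x p y d'' : walk x p y -> uniq (x :: map dend p) -> d'' \in p ->
  (y == src d''.1) || (y == tgt d''.1) -> d'' = last d'' p.
Proof.
elim: p x => [|d p IH] x //=.
case=> <- Hw /andP [Hx Hu]; rewrite inE => /orP [/eqP Hd | Hin] Hy.
  case: p IH Hw Hx Hu Hy => [|d1 p] IH Hw Hx Hu Hy /=; first by rewrite Hd.
  exfalso; have Hin := walk_last_in Hw isT.
  move: Hy; rewrite Hd endpointsE => /orP [] /eqP Hy.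
  - by move: Hx; rewrite -Hy inE Hin orbT.
  - by move: Hu; rewrite /= -Hy Hin.
have := IH _ Hw Hu Hin Hy.
by case: p {IH Hw Hu Hx} Hin.
Qed.

Lemma edge_uniq x p y : walk x p y -> uniq (x :: map dend p) -> uniq (map fst p).
Proof.
elim: p x => [|d p IH] x //=.
case=> <- Hw /andP [Hx Hu]; rewrite (IH _ Hw Hu) andbT.
apply/negP => /mapP [d'' Hd'' Heq].
have Hv := walk_verts Hw.
have : (dstart d == dstart d'') || (dstart d == dend d'').
  by rewrite -endpointsE -Heq /Defs.dstart; case: d.2; rewrite eqxx ?orbT.
move=> /orP [] /eqP He; move: Hx; rewrite He /= .
- have : dstart d'' \in rcons (map dstart p) y by rewrite mem_rcons inE map_f ?orbT.
  by rewrite Hv => ->.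
- by rewrite inE map_f ?orbT.
Qed.

Lemma sp_bound w p z : sp w p z -> (size p < #|V|)%N.
Proof.
case=> _ [_ Hu].
have := uniq_leq_size Hu (s2 := enum V) (fun x _ => mem_enum V x).
by rewrite /= size_map cardE.
Qed.

Lemma sp_rev w p z : sp w p z -> sp z (revw p) w.
Proof.
case=> Hw [Ha Hu]; split; first exact: walk_rev.
split.
  by rewrite /revw all_rev all_map; apply: sub_all Ha => d.
by rewrite map_dend_rev -rev_rcons rev_uniq (walk_verts Hw).
Qed.

Lemma last_nonempty (d1 d2 : E * bool) q : q != [::] -> last d1 q = last d2 q.
Proof. by case: q. Qed.

Lemma leaf_end w p z : acyclic -> sp w p z -> p != [::] ->
  (forall w' p' z', sp w' p' z' -> (size p' <= size p)%N) -> exists e, leaf z e.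
Proof.
move=> Hac Hsp Hne Hmax.
move: (Hsp) => [Hw [Ha Hu]].
case/lastP E0: p Hne => [//|p0 dl] _.
have Hw' : walk w (p0 ++ [:: dl]) z by rewrite cats1 -E0.
have [y0 [Hw0 Hdl]] := walk_catE Hw'.
case: Hdl => Hy0 Hz.
have Hv0 := walk_verts Hw0.
have Hy0in : y0 \in w :: map dend p0 by rewrite -Hv0 mem_rcons inE eqxx.
have Hu2 : uniq (rcons (w :: map dend p0) z).
  by move: Hu; rewrite E0 map_rcons -rcons_cons Hz.
have Hy0z : y0 != z.
  by apply/eqP => Heq; move: Hu2; rewrite rcons_uniq -Heq Hy0in.
exists dl.1; split; first by move: Ha; rewrite E0 all_rcons => /andP [].
split.
  move: Hy0 Hz Hy0z; rewrite /Defs.dstart /Defs.dend; case: dl.2 => <- <-.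
    by move=> /negbTE ->; rewrite eqxx.
  by move=> /negbTE ->; rewrite eqxx.
move=> e' He' HS; apply/negPn/negP; rewrite negb_and !negbK => Hzz.
set d' := (e', src e' == z).
have Hd's : dstart d' = z.
  rewrite /Defs.dstart /d' /=; case Hs: (src e' == z); first exact/eqP.
  by move: Hzz; rewrite Hs => /eqP.
set w' := dend d'.
case Hin: (w' \in w :: map dend p).
- have [p1 [p2 [Ep [H1 H2]]]] := split_vertex Hw Hin.
  apply: (Hac w' (rcons p2 d')).
  + split; first by case: p2 {Ep H2}.
    split; first by rewrite -cats1; apply: walk_cat H2 _; split.
    have Hv1 := walk_verts H1.
    have Hw'1 : w' \in w :: map dend p1 by rewrite -Hv1 mem_rcons inE eqxx.
    have Hu3 : uniq (w' :: map dend p2).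
      move: Hu; rewrite Ep map_cat -cat_cons cat_uniq => /and3P [_ Hd Hu2'].
      rewrite /= Hu2' andbT; apply/negP => Hm; move/hasP: Hd; apply.
      by exists w'.
    split.
      rewrite map_rcons rcons_uniq; apply/andP; split.
        apply/mapP => -[d'' Hd'' Heq].
        have Hz' : (z == src d''.1) || (z == tgt d''.1).
          by rewrite -Heq /= -Hd's /Defs.dstart /=; case: (src e' == z); rewrite eqxx ?orbT.
        have Hl := last_dart H2 Hu3 Hd'' Hz'.
        have : last dl p = dl by rewrite E0 last_rcons.
        rewrite Ep last_cat (@last_nonempty _ d'') -?Hl; last by case: p2 Hd'' {Ep H2 Hu3 Hl}.
        move=> Hdd; move/eqP: He'; apply; rewrite -Hdd; exact: Heq.
      exact: edge_uniq H2 Hu3.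
    by rewrite map_rcons Hd's (walk_verts H2).
  + rewrite all_rcons HS /=; move: Ha; by rewrite Ep all_cat => /andP [].
- have Hsp2 : sp w (rcons p d') w'.
    split; first by rewrite -cats1; apply: walk_cat Hw _; split.
    split; first by rewrite all_rcons HS.
    by rewrite map_rcons -rcons_cons rcons_uniq Hin Hu.
  have := Hmax _ _ _ Hsp2; by rewrite size_rcons ltnn.
Qed.

Lemma forest : acyclic -> (exists e, S e) ->
  exists z1 z2 e1 e2, z1 != z2 /\ leaf z1 e1 /\ leaf z2 e2.
Proof.
move=> Hac [e Se].
have Hloop : src e != tgt e.
  apply/eqP => Hl; apply: (Hac (src e) [:: (e, true)]); last by rewrite /= Se.
  split=> //; split=> //; by split.
pose P n := pbool (exists w p z, sp w p z /\ size p = n).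
have exP : exists n, P n.
  exists 1%N; apply/pboolE; exists (src e), [:: (e,true)], (tgt e).
  split=> //; split; first by split.
  by rewrite /= Se inE Hloop.
have ubP : forall n, P n -> (n <= #|V|)%N.
  move=> n /pboolE [w [p [z [Hs <-]]]]; exact: ltnW (sp_bound Hs).
case: (ex_maxnP exP ubP) => n /pboolE [w [p [z [Hs Hn]]]] Hmx.
have Hmax : forall w' p' z', sp w' p' z' -> (size p' <= size p)%N.
  move=> w' p' z' H; rewrite Hn; apply: Hmx; apply/pboolE; by exists w', p', z'.
have Hn1 : (1 <= n)%N.
  apply: Hmx; apply/pboolE; exists (src e), [:: (e,true)], (tgt e).
  split=> //; split; first by split.
  by rewrite /= Se inE Hloop.
have Hne : p != [::] by move: Hn1; rewrite -Hn; case: p {Hs Hmax Hn}.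
have [e2 L2] := leaf_end Hac Hs Hne Hmax.
have Hsr := sp_rev Hs.
have Hsz : size (revw p) = size p by rewrite /revw size_rev size_map.
have Hne' : revw p != [::] by rewrite -size_eq0 Hsz size_eq0.
have Hmax' : forall w' p' z', sp w' p' z' -> (size p' <= size (revw p))%N.
  by move=> w' p' z' H; rewrite Hsz; exact: Hmax H.
have [e1 L1] := leaf_end Hac Hsr Hne' Hmax'.
exists w, z, e1, e2; split=> //.
case: Hs => Hw [_ Hu].
have Hzin := walk_last_in Hw Hne.
apply/eqP => Hwz; move: Hu; by rewrite /= Hwz Hzin.
Qed.
End F.


Section P.
Variables (V E : finType) (src tgt : E -> V).
Notation walk := (is_walk src tgt).
Notation dstart := (dstart src tgt).
Notation dend := (dend src tgt).

Lemma bd_leaf (b : E -> int) z e : leaf src tgt (fun e => b e != 0) z e ->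
  bd src tgt b z = b e * ((tgt e == z)%:Z - (src e == z)%:Z).
Proof.
case=> _ [_ H]; rewrite /bd (bigD1 e) //= big1 ?addr0 // => e' He'.
case: (boolP (b e' == 0)) => [/eqP -> | Hb]; first by rewrite mul0r.
by case/andP: (H e' He' Hb) => /negbTE -> /negbTE ->; rewrite subrr mulr0.
Qed.

Lemma small_dvd (m : nat) (t c : int) : (3 <= m)%N -> (1 <= `|t|)%N -> (2 * `|t| <= m)%N ->
  (-1 <= c <= 1) -> (m%:Z %| t - c)%Z -> t = c /\ c != 0.
Proof.
move=> Hm Ht Htm Hc; rewrite dvdzE absz_nat.
case: (boolP (t - c == 0)) => [/eqP Htc | Htc].
  have Htc' : t = c by apply/eqP; rewrite -subr_eq0 Htc.
  split=> //; rewrite -Htc'; by rewrite -absz_eq0; lia.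
move=> /dvdn_leq; rewrite absz_gt0 Htc => /(_ isT) Hle; exfalso.
move: Hc => /andP [Hc1 Hc2]; lia.
Qed.

Lemma sum_abs0 (b : E -> int) : (\sum_e `|b e|)%N = 0%N -> forall e, b e = 0.
Proof.
move=> H e; move: H; rewrite (bigD1 e) //= => H; apply/eqP; rewrite -absz_eq0; lia.
Qed.

Lemma card_supp (b : E -> int) : (#|[pred e | b e != 0]| <= \sum_e `|b e|)%N.
Proof.
rewrite -sum1_card big_mkcond /=; apply: leq_sum => e _.
by case: ifP => //; rewrite inE /= -absz_gt0.
Qed.

Lemma peel (m : nat) (Hm : (3 <= m)%N) n : forall (b : E -> int) u v,
  (\sum_e `|b e|)%N = n ->
  (forall e, (2 * `|b e| <= m)%N) ->
  (forall v0 p, is_cycle src tgt v0 p -> (n < size p)%N) ->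
  (forall z, (m%:Z %| bd src tgt b z - ((v == z)%:Z - (u == z)%:Z))%Z) ->
  exists p, walk u p v /\ size p = n /\ forall e, cnt e p = b e.
Proof.
elim: n => [|n IH] b u v Hs Hb Hcyc Hbd.
  have H0 := sum_abs0 Hs.
  have Hbd0 : forall z, bd src tgt b z = 0.
    by move=> z; rewrite /bd big1 // => e _; rewrite H0 mul0r.
  case: (eqVneq u v) => [<- | Huv].
    by exists [::]; split=> //; split=> // e; rewrite H0.
  exfalso; move: (Hbd v); rewrite Hbd0 eqxx (negbTE Huv) dvdzE /=.
  move=> H; have := dvdn_leq _ H; lia.
pose S := fun e => b e != 0.
have Hac : acyclic src tgt S.
  move=> v0 p Hc Hall; have := Hcyc _ _ Hc.
  case: Hc => _ [_ [Hu _]].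
  have : (size (map fst p) <= #|[pred e | b e != 0]|)%N.
    rewrite cardE; apply: uniq_leq_size => // e /mapP [d Hd ->].
    rewrite mem_enum /=; by move/allP: Hall => /(_ d Hd).
  have := card_supp b; rewrite size_map Hs; lia.
have HSe : exists e, S e.
  case: (pickP S) => [e He | H0]; first by exists e.
  exfalso; have : (\sum_e `|b e| = 0)%N.
    by rewrite big1 // => e _; move: (H0 e); rewrite /S => /negbFE /eqP ->.
  by rewrite Hs.
have Hlf : forall z e, leaf src tgt S z e ->
    bd src tgt b z = (v == z)%:Z - (u == z)%:Z /\ ((v == z)%:Z - (u == z)%:Z != 0).
  move=> z e Hl; apply: small_dvd Hm _ _ _ (Hbd z).
  - rewrite (bd_leaf Hl); case: Hl => Se [Hx _].
    move: Hx Se; rewrite /S; case: (src e == z); case: (tgt e == z) => //= _; lia.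
  - rewrite (bd_leaf Hl); case: Hl => Se [Hx _].
    move: Hx (Hb e); case: (src e == z); case: (tgt e == z) => //= _; lia.
  - by case: (v == z); case: (u == z).
have [z1 [z2 [e1 [e2 [Hz12 [L1 L2]]]]]] := forest Hac HSe.
have [Bz1 Nz1] := Hlf _ _ L1.
have [Bz2 Nz2] := Hlf _ _ L2.
have Huv : u != v.
  apply/eqP => Huv; move: Nz1; by rewrite Huv subrr.
have [e [Le Bu]] : exists e, leaf src tgt S u e /\ bd src tgt b u = -1.
  have Hbu : forall z, (v == z)%:Z - (u == z)%:Z != 0 -> z != v -> z = u.
    move=> z H Hv; apply/eqP; move: H; rewrite (eq_sym v) (negbTE Hv) (eq_sym u).
    by case: (z == u).
  case: (eqVneq z1 v) => [Ez1 | Nv1].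
  - have Hz2 : z2 = u.
      apply: Hbu Nz2 _; by rewrite -Ez1 eq_sym.
    exists e2; rewrite -Hz2; split=> //; rewrite Bz2 Hz2 eqxx.
    by rewrite eq_sym (negbTE Huv).
  - have Hz1 : z1 = u by apply: Hbu Nz1 Nv1.
    exists e1; rewrite -Hz1; split=> //; rewrite Bz1 Hz1 eqxx.
    by rewrite eq_sym (negbTE Huv).
set d := (e, src e == u).
set sg : int := if d.2 then 1 else -1.
have Hds : dstart d = u.
  rewrite /Defs.dstart /d /=; case Hs': (src e == u); first exact/eqP.
  case: Le => _ [Hx _]; move: Hx; rewrite Hs'.
  by case: (tgt e =P u) => [-> //| _ //].
have Hbe : b e = sg.
  move: Bu; rewrite (bd_leaf Le) /sg /d /=; case: Le => _ [Hx _].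
  move: Hx; case: (src e == u); case: (tgt e == u) => //= _; lia.
pose dl := fun e0 => if d.1 == e0 then (if d.2 then 1 else -1) else (0 : int).
pose b' := fun e0 => b e0 - dl e0.
have Hb'e : b' e = 0 by rewrite /b' /dl /= eqxx -/sg Hbe subrr.
have Hb'o : forall e0, e0 != e -> b' e0 = b e0.
  by move=> e0 He0; rewrite /b' /dl /= eq_sym (negbTE He0) subr0.
have Hs' : (\sum_e0 `|b' e0| = n)%N.
  rewrite (bigD1 e) //= Hb'e add0n.
  move: Hs; rewrite (bigD1 e) //= Hbe.
  have -> : `|sg|%N = 1%N by rewrite /sg; case: d.2.
  rewrite add1n => [[<-]]; apply: eq_bigr => e0 He0; by rewrite Hb'o.
have Hb' : forall e0, (2 * `|b' e0| <= m)%N.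
  move=> e0; case: (eqVneq e0 e) => [-> | He0]; first by rewrite Hb'e.
  by rewrite Hb'o.
have Hcyc' : forall v0 p, is_cycle src tgt v0 p -> (n < size p)%N.
  move=> v0 p Hc; exact: ltnW (Hcyc _ _ Hc).
have Hbd' : forall z, (m%:Z %| bd src tgt b' z - ((v == z)%:Z - (dend d == z)%:Z))%Z.
  move=> z; have -> : bd src tgt b' z - ((v == z)%:Z - (dend d == z)%:Z)
      = bd src tgt b z - ((v == z)%:Z - (u == z)%:Z).
    rewrite /b' (bd_sub src tgt b dl) /dl bd_dart Hds; lia.
  exact: Hbd.
have [p [Hw [Hsz Hc]]] := IH b' (dend d) v Hs' Hb' Hcyc' Hbd'.
exists (d :: p); split; first by split.
split; first by rewrite /= Hsz.
move=> e0 /=; rewrite Hc /b' /dl; by rewrite addrC subrK.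
Qed.
End P.


Section C.
Variables (V E : finType) (src tgt : E -> V) (m : nat) (T0 : {set E}).
Hypothesis Hm : (1 < m)%N.
Notation walk := (is_walk src tgt).
Notation cwalk := (is_walk (@csrc V E src m T0) (@ctgt V E tgt m T0)).
Notation K := (@Kgrp E m T0).
Notation rho := (@rho E m T0).

Definition ks (c : E -> int) : K := \sum_e rho e *~ c e.
Definition proj (g : seq (@cedg E m T0 * bool)) : seq (E * bool) := map (fun d => (d.1.1, d.2)) g.

Lemma ks_cons d p : ks ((fun e0 => cnt e0 (d :: p))) = (if d.2 then rho d.1 else - rho d.1) + ks ((fun e0 => cnt e0 p)).
Proof.
rewrite /ks /=.
rewrite (eq_bigr (fun e => rho e *~ (if d.1 == e then (if d.2 then 1 else -1) else 0) + rho e *~ cnt e p)); last first.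
  by move=> e _; rewrite mulrzDr.
rewrite big_split /= (bigD1 d.1) //= eqxx big1 ?addr0; last first.
  by move=> e /negbTE; rewrite eq_sym => ->; rewrite mulr0z.
by case: d.2; rewrite ?mulr1z ?mulrN1z.
Qed.

Lemma cwalk_proj x g y : cwalk x g y ->
  walk x.1 (proj g) y.1 /\ y.2 = x.2 + ks ((fun e0 => cnt e0 (proj g))).
Proof.
elim: g x => [|d g IH] x /=.
  move=> ->; split=> //; by rewrite /ks big1 ?addr0 // => e _; rewrite mulr0z.
case=> <- /IH [Hw Hk]; split.
  split; first by rewrite /Defs.dstart /=; case: d.2.
  have -> : Defs.dend src tgt (d.1.1, d.2) = (Defs.dend (@csrc V E src m T0) (@ctgt V E tgt m T0) d).1.
    by rewrite /Defs.dend /=; case: d.2.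
  exact: Hw.
rewrite Hk (ks_cons (d.1.1, d.2) (proj g)) /= addrA; congr (_ + _).
by rewrite /Defs.dstart /Defs.dend /=; case: d.2 => //=; rewrite addrK.
Qed.

Lemma cover_lift u p v : walk u p v -> forall k, exists g,
  cwalk (u, k) g (v, k + ks ((fun e0 => cnt e0 p))) /\ proj g = p.
Proof.
elim: p u => [|d p IH] u /=.
  move=> -> k; exists [::]; split=> //; by rewrite /ks big1 ?addr0 // => e _; rewrite mulr0z.
case=> <- Hw k.
pose k1 := if d.2 then k + rho d.1 else k - rho d.1.
have [g [Hg Hp]] := IH _ Hw k1.
exists (((d.1, if d.2 then k else k1), d.2) :: g); split; last by rewrite /proj /= -/(proj g) Hp; case: (d) => ? [] /=.
split.
  rewrite /Defs.dstart /= /k1 /csrc /ctgt; case: d.2 => //=; by rewrite subrK.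
have -> : (k + ks ((fun e0 => cnt e0 (d :: p)))) = k1 + ks ((fun e0 => cnt e0 p)).
  by rewrite ks_cons addrA /k1; case: d.2.
move: Hg; congr (cwalk _ g _).
rewrite /Defs.dend /k1 /=; by case: d.2.
Qed.

Lemma rho_mulm e : rho e *+ m = 0.
Proof.
apply/ffunP => c; rewrite ffunMnE !ffunE; case: ifP => _; last by rewrite mul0rn.
exact: pchar_Zp.
Qed.

Lemma ks_congr (c c' : E -> int) : (forall e, (m%:Z %| c e - c' e)%Z) -> ks c = ks c'.
Proof.
move=> H; rewrite /ks; apply: eq_bigr => e _; apply/eqP; rewrite -subr_eq0 -mulrzBr.
have /dvdzP [q ->] := H e.
by rewrite mulrC mulrzA -[rho e *~ m%:Z]/(rho e *+ m) rho_mulm mul0rz.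
Qed.

Lemma rho_tree e : e \in T0 -> rho e = 0.
Proof.
move=> He; apply/ffunP => c; rewrite !ffunE; case: eqP => // Hc.
by move: (valP c); rewrite Hc He.
Qed.

Lemma ks_tree p : all (fun d => d.1 \in T0) p -> ks ((fun e0 => cnt e0 p)) = 0.
Proof.
elim: p => [|d p IH] /=; first by rewrite /ks big1 // => e _; rewrite mulr0z.
by move=> /andP [Hd /IH]; rewrite ks_cons => ->; rewrite rho_tree //; case: d.2; rewrite ?oppr0 addr0.
Qed.

Definition reach x y := exists g, cwalk x g y.

Lemma reach_trans x y z : reach x y -> reach y z -> reach x z.
Proof. move=> [g1 H1] [g2 H2]; exists (g1 ++ g2); exact: walk_cat H1 H2. Qed.

Hypothesis Htree : forall u v, exists p, walk u p v /\ all (fun d => d.1 \in T0) p.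

Lemma reach_tree u v k : reach (u, k) (v, k).
Proof.
have [p [Hw Ha]] := Htree u v.
have [g [Hg _]] := cover_lift Hw k; exists g; by move: Hg; rewrite ks_tree // addr0.
Qed.

Lemma reach_rho u k e : reach (u, k) (u, k + rho e).
Proof.
apply: reach_trans (reach_tree u (src e) k) _.
apply: (reach_trans (y := (tgt e, k + rho e))); last exact: reach_tree.
by exists [:: ((e, k), true)].
Qed.

Lemma reach_add u k f : reach (u, k) (u, k + f).
Proof.
have -> : f = \sum_(c : cedge T0) rho (val c) *+ (f c : nat).
  apply/ffunP => c'; rewrite sum_ffunE (bigD1 c') //= !ffunMnE !ffunE eqxx.
  rewrite big1 ?addr0; first by rewrite natr_Zp.
  move=> c Hc; rewrite ffunMnE ffunE; case: eqP => [/val_inj Hcc| _]; last by rewrite mul0rn.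
  by move: Hc; rewrite Hcc eqxx.
elim/big_rec: _ k => [|c f' _ IH] k; first by rewrite addr0; exact: reach_tree.
apply: (reach_trans (y := (u, k + rho (val c) *+ f c))).
  elim: (nat_of_ord (f c)) => [|n IHn]; first by rewrite mulr0n addr0; exact: reach_tree.
  apply: reach_trans IHn _; rewrite mulrS (addrC (rho _)) addrA; exact: reach_rho.
by rewrite addrA; exact: IH.
Qed.

Lemma reach_all x y : reach x y.
Proof.
case: x y => [u k] [v k'].
apply: (reach_trans (y := (u, k'))); last exact: reach_tree.
have := reach_add u k (k' - k); by rewrite addrC subrK.
Qed.

Lemma geo_exists x y : exists g, geodesic (@csrc V E src m T0) (@ctgt V E tgt m T0) x g y.
Proof.
pose P n := pbool (exists g, cwalk x g y /\ size g = n).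
have exP : exists n, P n.
  have [g Hg] := reach_all x y; exists (size g); apply/pboolE; by exists g.
case: (ex_minnP exP) => n /pboolE [g [Hg <-]] Hmin.
exists g; split=> // q Hq; apply: Hmin; apply/pboolE; by exists q.
Qed.

Lemma npos_nneg e (g : seq (@cedg E m T0 * bool)) :
  (npos e g)%:Z - (nneg e g)%:Z = cnt e (proj g).
Proof.
elim: g => [|d g IH] //=; rewrite /npos /nneg /= -/(npos e g) -/(nneg e g).
rewrite -IH; case: (d.1.1 == e); case: d.2 => /=; lia.
Qed.
End C.


Definition rep (m : nat) (c : int) : int :=
  let r := (`|c| %% m)%N in
  let b0 := if (r <= m - r)%N then r%:Z else r%:Z - m%:Z in
  if 0 <= c then b0 else - b0.

Lemma rep_props (m : nat) (c : int) : (2 <= m)%N ->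
  `|rep m c|%N = minn (`|c| %% m) (m - `|c| %% m) /\ (2 * `|rep m c| <= m)%N
  /\ (m%:Z %| c - rep m c)%Z.
Proof.
move=> Hm.
have Hd := divn_eq `|c| m.
have Hr : (`|c| %% m < m)%N by rewrite ltn_mod; lia.
rewrite /rep /=.
move: Hd Hr; move: (`|c| %% m)%N (`|c| %/ m)%N => r q Hd Hr.
have Hc : c = `|c|%:Z \/ c = - `|c|%:Z.
  lia.
case Hsg: (0 <= c); case Hrr: (r <= m - r)%N.
- split; first by rewrite absz_nat; lia.
  split; first by rewrite absz_nat; lia.
  apply/dvdzP; exists q%:Z; nia.
- split; first by lia.
  split; first by lia.
  apply/dvdzP; exists (q.+1)%:Z; nia.
- split; first by rewrite abszN absz_nat; lia.
  split; first by rewrite abszN absz_nat; lia.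
  apply/dvdzP; exists (- q%:Z); nia.
- split; first by rewrite abszN; lia.
  split; first by rewrite abszN; lia.
  apply/dvdzP; exists (- (q.+1)%:Z); nia.
Qed.

Lemma Ne_pos (V E : finType) (src tgt : E -> V) (T0 : {set E}) :
  two_connected src tgt ->
  (exists N : nat, forall e : E, Ne src tgt e = N) ->
  spanning_tree src tgt T0 -> forall e, Ne src tgt e != 0%N.
Proof.
move=> H2 [N HN] [Hsp1 Hsp2] e.
case: (pickP (fun e => e \notin T0)) => [e0 He0 | Hall].
  rewrite HN -(HN e0); apply/eqP => /cards0_eq H.
  have : T0 \in [set T in trees src tgt | e0 \notin T].
    by rewrite !inE He0 andbT; apply/pboolE; split.
  by rewrite H inE.
exfalso.
have [q [Hq Ha]] := H2 e (src e) (tgt e).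
set c := rcons q (e, false).
have Hc : is_walk src tgt (src e) c (src e).
  by rewrite /c -cats1; apply: walk_cat Hq _.
pose a := fun e0 => cnt e0 c.
have Hae : a e = -1 by rewrite /a /c -cats1 cnt_cat (cnt_avoid Ha) /= eqxx.
have Hbd : forall z, bd src tgt a z = 0 by move=> z; rewrite (@bd_walk _ _ src tgt _ _ _ z Hc) subrr.
have Hac : acyclic src tgt (fun e0 => a e0 != 0).
  move=> v p Hcy _; apply: (Hsp2 v p Hcy); apply/allP => d _.
  by move: (Hall d.1) => /= /negbFE.
have Hex : exists e0, a e0 != 0 by exists e; rewrite Hae.
have [z1 [z2 [e1 [e2 [_ [L1 _]]]]]] := forest Hac Hex.
move: (Hbd z1); rewrite (bd_leaf L1); case: L1 => S1 [Hx _].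
move: Hx S1; case: (src e1 == z1); case: (tgt e1 == z1) => //= _; lia.
Qed.

Unset Implicit Arguments.

Theorem mainTheorem3 (V E : finType) (src tgt : E -> V) (m : nat)
    (T0 : {set E}) :
  (3 <= m)%N ->
  graph_connected src tgt ->
  two_connected src tgt ->
  (exists N : nat, forall e : E, Ne src tgt e = N) ->
  spanning_tree src tgt T0 ->
  forall x y : @cvert V E m T0,
    (exists g, geodesic (@csrc V E src m T0) (@ctgt V E tgt m T0) x g y) /\
    (forall g, geodesic (@csrc V E src m T0) (@ctgt V E tgt m T0) x g y ->
       (lt_girth src tgt (@dQ V E src tgt m T0 g)
          <-> lt_girth src tgt (size g)%:R)
       /\ (lt_girth src tgt (size g)%:R -> @dQ V E src tgt m T0 g = (size g)%:R)).
Proof.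
move=> Hm Hconn H2 HN Hsp x y.
have Hm1 : (1 < m)%N by lia.
have HNe := Ne_pos H2 HN Hsp.
split; first exact: (geo_exists Hsp.1).
move=> g [Hg Hmin].
have [Hw Hk] := cwalk_proj Hg.
set p := proj g in Hw Hk.
pose a := fun e => cnt e p.
pose w := fun e => minn (`|a e| %% m) (m - `|a e| %% m).
have HdQ : dQ src tgt g = (\sum_e w e)%:R.
  rewrite /dQ natr_sum; apply: eq_bigr => e _.
  rewrite (eq_bigl (fun T => T \in [set T in trees src tgt | e \notin T])); last first.
    by move=> T; rewrite !inE.
  rewrite sumr_const -/(Ne src tgt e) -[(_ * _) *+ _]mulr_natr mulrAC mulVf ?mul1r ?pnatr_eq0 ?HNe //.
  by rewrite /phi (npos_nneg Hm1).
set D := (\sum_e w e)%N in HdQ.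
have HDle : (D <= size g)%N.
  rewrite (_ : size g = size p); last by rewrite /p /proj size_map.
  apply: leq_trans (sum_abs_cnt p); apply: leq_sum => e _; rewrite /w; apply: leq_trans (geq_minl _ _) _; exact: leq_mod.
have Hcrux : lt_girth src tgt D%:R -> (size g <= D)%N.
  move=> Hgir.
  pose b := fun e => rep m (a e).
  have Hb := fun e => @rep_props m (a e) Hm1.
  have Hsb : (\sum_e `|b e| = D)%N by apply: eq_bigr => e _; case: (Hb e).
  have Hb2 : forall e, (2 * `|b e| <= m)%N by move=> e; case: (Hb e) => _ [].
  have Hdv : forall e, (m%:Z %| a e - b e)%Z by move=> e; case: (Hb e) => _ [].
  have Hcyc : forall v0 q, is_cycle src tgt v0 q -> (D < size q)%N.
    by move=> v0 q Hc; have := Hgir v0 q Hc; rewrite ltr_nat.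
  have Hbd : forall z, (m%:Z %| bd src tgt b z - ((y.1 == z)%:Z - (x.1 == z)%:Z))%Z.
    move=> z; rewrite -(bd_walk z Hw) -bd_sub /bd.
    apply: rpred_sum => e _; apply: dvdz_mulr.
    by rewrite -opprB rpredN; exact: Hdv.
  have [q [Hq [Hsq Hcq]]] := peel Hm Hsb Hb2 Hcyc Hbd.
  have [g' [Hg' Hpg']] := @cover_lift V E src tgt m T0 _ _ _ Hq x.2.
  have Hks : ks m T0 (fun e => cnt e q) = ks m T0 (fun e => cnt e p).
    apply: (ks_congr T0 Hm1) => e; rewrite Hcq -opprB rpredN; exact: Hdv.
  move: Hg'; rewrite Hks -Hk -!surjective_pairing => /Hmin.
  by rewrite -Hsq -Hpg' /proj size_map.
have mono : forall (r1 r2 : rat), r1 <= r2 -> lt_girth src tgt r2 -> lt_girth src tgt r1.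
  move=> r1 r2 H12 H v0 q Hc; exact: le_lt_trans H12 (H v0 q Hc).
rewrite HdQ; split; first split.
- move=> H; have Hle := Hcrux H.
  have -> : size g = D by apply/eqP; rewrite eqn_leq Hle HDle.
  exact: H.
- apply: mono; by rewrite ler_nat.
- move=> H; have H' : lt_girth src tgt D%:R by apply: mono H; rewrite ler_nat.
  have Hle := Hcrux H'.
  by have -> : size g = D by apply/eqP; rewrite eqn_leq Hle HDle.
Qed.
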